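(* Let $S$ be an abundant semigroup and let $S^0$ be an adequate transversal of $S$. Let $R=\{x\in S: e_x=e_{\bar x}\}$ and $L=\{x\in S: f_x=f_{\bar x}\}$. Then $S^0$ is a quasi-ideal of $S$ (i.e. $S^0SS^0\subseteq S^0$) if and only if $RL\subseteq S^0$.
   Context: For a semigroup $S$, $\mathcal{R}^\ast=\{(a,b)\in S\times S: \text{for all } x,y\in S^1,\ xa=ya \iff xb=yb\}$ and $\mathcal{L}^\ast$ is defined dually. $S$ is abundant if every $\mathcal{R}^\ast$-class and every $\mathcal{L}^\ast$-class contains an idempotent; adequate if it is abundant and its idempotents commute. In an adequate semigroup $a^+$ and $a^\ast$ denote the unique idempotents in the $\mathcal{R}^\ast$-class and $\mathcal{L}^\ast$-class of $a$. A subsemigroup $U$ of an abundant semigroup $S$ is a $\ast$-subsemigroup if $U$ is abundant and $\mathcal{L}^\ast_U=\mathcal{L}^\ast_S\cap(U\times U)$, $\mathcal{R}^\ast_U=\mathcal{R}^\ast_S\cap(U\times U)$. An adequate $\ast$-subsemigroup $S^0$ of an abundant semigroup $S$ is an adequate transversal of $S$ if for each $x\in S$ there is a unique $\bar x\in S^0$ and idempotents $e,f$ of $S$ with $x=e\bar x f$, $e\,\mathcal{L}\,\bar x^+$ and $f\,\mathcal{R}\,\bar x^\ast$ ($\mathcal{L},\mathcal{R}$ Green's relations); such $e,f$ are then uniquely determined by $x$ and are denoted $e_x$, $f_x$. *)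

(* Defs.v *)
Section Semigroup.
Variable T : Type.
Variable mul : T -> T -> T.

(* elements of S^1 are represented by option T, None being the adjoined 1 *)
Definition lmul1 (x : option T) (a : T) : T :=
  match x with Some u => mul u a | None => a end.
Definition rmul1 (a : T) (x : option T) : T :=
  match x with Some u => mul a u | None => a end.

Definition in1 (U : T -> Prop) (x : option T) : Prop :=
  match x with Some u => U u | None => True end.

Definition idem (e : T) : Prop := mul e e = e.

Definition RstarIn (U : T -> Prop) (a b : T) : Prop :=
  forall x y : option T, in1 U x -> in1 U y ->
    (lmul1 x a = lmul1 y a <-> lmul1 x b = lmul1 y b).
Definition LstarIn (U : T -> Prop) (a b : T) : Prop :=
  forall x y : option T, in1 U x -> in1 U y ->
    (rmul1 a x = rmul1 a y <-> rmul1 b x = rmul1 b y).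

Definition SetT : T -> Prop := fun _ => True.
Definition Rstar := RstarIn SetT.
Definition Lstar := LstarIn SetT.

Definition GreenL (a b : T) : Prop :=
  (exists u : option T, a = lmul1 u b) /\ (exists v : option T, b = lmul1 v a).
Definition GreenR (a b : T) : Prop :=
  (exists u : option T, a = rmul1 b u) /\ (exists v : option T, b = rmul1 a v).

Definition closed (U : T -> Prop) : Prop :=
  forall a b, U a -> U b -> U (mul a b).

Definition abundantIn (U : T -> Prop) : Prop :=
  forall a, U a ->
    (exists e, U e /\ idem e /\ RstarIn U a e) /\
    (exists e, U e /\ idem e /\ LstarIn U a e).

Definition abundant : Prop := abundantIn SetT.

Definition adequateIn (U : T -> Prop) : Prop :=
  abundantIn U /\
  forall e f, U e -> U f -> idem e -> idem f -> mul e f = mul f e.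

Definition star_subsemigroup (U : T -> Prop) : Prop :=
  closed U /\ abundantIn U /\
  (forall a b, U a -> U b -> (LstarIn U a b <-> Lstar a b)) /\
  (forall a b, U a -> U b -> (RstarIn U a b <-> Rstar a b)).

Definition isPlus (U : T -> Prop) (a p : T) : Prop :=
  U p /\ idem p /\ RstarIn U a p.
Definition isStar (U : T -> Prop) (a p : T) : Prop :=
  U p /\ idem p /\ LstarIn U a p.

Definition decomp (U : T -> Prop) (x xb e f : T) : Prop :=
  U xb /\ idem e /\ idem f /\ x = mul (mul e xb) f /\
  (exists p, isPlus U xb p /\ GreenL e p) /\
  (exists s, isStar U xb s /\ GreenR f s).

Definition adequate_transversal (S0 : T -> Prop) : Prop :=
  star_subsemigroup S0 /\ adequateIn S0 /\
  forall x, exists xb, (S0 xb /\ exists e f, decomp S0 x xb e f) /\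
    forall xb', (S0 xb' /\ exists e f, decomp S0 x xb' e f) -> xb' = xb.

(* e = e_x, f = f_x (determined uniquely by x, as recalled in the paper) *)
Definition is_ex (S0 : T -> Prop) (x e : T) : Prop :=
  exists xb f, decomp S0 x xb e f.
Definition is_fx (S0 : T -> Prop) (x f : T) : Prop :=
  exists xb e, decomp S0 x xb e f.

(* R = {x : e_x = e_{xbar}},  L = {x : f_x = f_{xbar}} *)
Definition setR (S0 : T -> Prop) (x : T) : Prop :=
  exists xb e f, decomp S0 x xb e f /\ is_ex S0 xb e.
Definition setL (S0 : T -> Prop) (x : T) : Prop :=
  exists xb e f, decomp S0 x xb e f /\ is_fx S0 xb f.

Definition quasi_ideal (S0 : T -> Prop) : Prop :=
  forall a s b, S0 a -> S0 b -> S0 (mul (mul a s) b).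

End Semigroup.

(* Main.v *)
Require Import Defs.

Section Aux.
Variable T : Type.
Variable mul : T -> T -> T.
Hypothesis mulA : forall a b c, mul a (mul b c) = mul (mul a b) c.

Lemma GL_refl a : GreenL T mul a a.
Proof. split; exists None; reflexivity. Qed.
Lemma GR_refl a : GreenR T mul a a.
Proof. split; exists None; reflexivity. Qed.

Lemma plus_self (S0 : T -> Prop) p : S0 p -> idem T mul p -> isPlus T mul S0 p p.
Proof. intros; repeat split; auto; tauto. Qed.
Lemma star_self (S0 : T -> Prop) p : S0 p -> idem T mul p -> isStar T mul S0 p p.
Proof. intros; repeat split; auto; tauto. Qed.

Lemma decomp_self (S0 : T -> Prop) p : S0 p -> idem T mul p -> decomp T mul S0 p p p p.
Proof.
  intros Hp Ip. unfold decomp. repeat split; auto.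
  - unfold idem in Ip. rewrite !Ip. reflexivity.
  - exists p; split; [apply plus_self; auto | apply GL_refl].
  - exists p; split; [apply star_self; auto | apply GR_refl].
Qed.

Lemma in_S0_R_L (S0 : T -> Prop) a :
  adequateIn T mul S0 -> S0 a -> setR T mul S0 a /\ setL T mul S0 a.
Proof.
  intros [Hab _] Ha.
  destruct (Hab a Ha) as [[p [Sp [Ip Rp]]] [q [Sq [Iq Lq]]]].
  assert (E1 : mul p a = a).
  { apply (proj2 (Rp (Some p) None Sp I)). simpl. exact Ip. }
  assert (E2 : mul a q = a).
  { apply (proj2 (Lq (Some q) None Sq I)). simpl. exact Iq. }
  assert (D : decomp T mul S0 a a p q).
  { unfold decomp. repeat split; auto.
    - rewrite E1, E2. reflexivity.
    - exists p; split; [exact (conj Sp (conj Ip Rp)) | apply GL_refl].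
    - exists q; split; [exact (conj Sq (conj Iq Lq)) | apply GR_refl]. }
  split.
  - exists a, p, q. split; auto. exists a, q. exact D.
  - exists a, p, q. split; auto. exists a, p. exact D.
Qed.

End Aux.

Theorem lemma1p4 (T : Type) (mul : T -> T -> T)
  (mulA : forall a b c, mul a (mul b c) = mul (mul a b) c)
  (HS : abundant T mul) (S0 : T -> Prop)
  (HS0 : adequate_transversal T mul S0) :
  quasi_ideal T mul S0 <->
  (forall r l, setR T mul S0 r -> setL T mul S0 l -> S0 (mul r l)).
Proof.
  destruct HS0 as [[Hcl _] [Had Htr]].
  split.
  - intros Hq r l [xb [e [f [Dr [xb' [f' Dx]]]]]] [yb [e2 [f2 [Dl [yb' [e2' Dy]]]]]].
    destruct Dr as [Sxb [Ie [If [Er _]]]].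
    destruct Dx as [_ [_ [_ [Ex _]]]].
    destruct Dl as [Syb [Ie2 [If2 [El _]]]].
    destruct Dy as [_ [_ [_ [Ey _]]]].
    assert (Er' : r = mul xb f).
    { rewrite Er. f_equal. rewrite Ex. rewrite !mulA. unfold idem in Ie. rewrite Ie. reflexivity. }
    assert (El' : l = mul e2 yb).
    { rewrite El. rewrite <- mulA. f_equal. rewrite Ey. rewrite <- !mulA.
      unfold idem in If2. rewrite If2. reflexivity. }
    rewrite Er', El'.
    replace (mul (mul xb f) (mul e2 yb)) with (mul (mul xb (mul f e2)) yb)
      by (rewrite !mulA; reflexivity).
    apply Hq; auto.
  - intros H a s b Sa Sb.
    destruct (Htr s) as [sb [[Ssb [e [f D]]] _]].
    destruct D as [_ [Ie [If [Es [[p [[Sp [Ip _]] GL]] [q [[Sq [Iq _]] GR]]]]]]].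
    assert (LE : setL T mul S0 e).
    { exists p, e, p. split.
      - unfold decomp. repeat split; auto.
        + destruct GL as [[u Hu] _]. rewrite Hu. destruct u as [u|]; simpl;
            unfold idem in Ip; rewrite <- ?mulA; rewrite ?Ip; rewrite ?Ip; reflexivity.
        + exists p; split; [apply plus_self; auto | exact GL].
        + exists p; split; [apply star_self; auto | apply GR_refl].
      - exists p, p. apply decomp_self; auto. }
    assert (RF : setR T mul S0 f).
    { exists q, q, f. split.
      - unfold decomp. repeat split; auto.
        + destruct GR as [[u Hu] _]. rewrite Hu. destruct u as [u|]; simpl;
            unfold idem in Iq; rewrite ?mulA; rewrite ?Iq; rewrite ?Iq; reflexivity.
        + exists q; split; [apply plus_self; auto | apply GL_refl].
        + exists q; split; [apply star_self; auto | exact GR].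
      - exists q, q. apply decomp_self; auto. }
    destruct (in_S0_R_L T mul S0 a Had Sa) as [Ra _].
    destruct (in_S0_R_L T mul S0 b Had Sb) as [_ Lb].
    pose proof (H a e Ra LE) as Sae.
    pose proof (H f b RF Lb) as Sfb.
    replace (mul (mul a s) b) with (mul (mul (mul a e) sb) (mul f b))
      by (rewrite Es; rewrite !mulA; reflexivity).
    apply Hcl; auto.
Qed.
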